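(* Let $Q$ be an automorphic loop satisfying condition (C) (for all $a,b\in Q$: $a(ab)=(ba)a$ if and only if $ab=ba$), and let $x,y\in Q$. If $xyx^{-1}=x^{-1}yx$, then the subloop $\langle x,y\rangle$ generated by $x$ and $y$ is commutative.
   Context: A loop is a set with a binary operation in which all equations $ax=b$, $ya=b$ are uniquely solvable and which has a two-sided identity. For $a\in L$, $R_a:x\mapsto xa$, $L_a:x\mapsto ax$; the inner mapping group is the stabilizer of the identity in the group generated by all $R_a,L_a$. A loop is automorphic if every inner mapping is an automorphism. Automorphic loops are power associative and satisfy $(x^m u)x^n=x^m(ux^n)$ for all integers $m,n$, so $xyx^{-1}$ and $x^{-1}yx$ are unambiguous. The subloop generated by a subset $S$ is the intersection of all subloops containing $S$. *)

(* Defs.v *)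
Section Loops.
Variable T : Type.
Variable mul : T -> T -> T.
Variable e : T.
Local Infix "*" := mul.

Definition is_loop : Prop :=
  (forall a b : T, exists! x, a * x = b) /\
  (forall a b : T, exists! y, y * a = b) /\
  (forall x : T, e * x = x /\ x * e = x).

(* Multiplication group Mlt(Q) = group generated by all R_a, L_a, described as the
   set of all finite words in the R_a, L_a and their inverses.
   [g = R_a^{-1} o f] is characterised by [R_a o g = f] (R_a is a bijection). *)
Inductive mlt : (T -> T) -> Prop :=
  | mlt_id : mlt (fun x => x)
  | mlt_R : forall a f, mlt f -> mlt (fun x => f x * a)
  | mlt_L : forall a f, mlt f -> mlt (fun x => a * f x)
  | mlt_Rinv : forall a f g, mlt f -> (forall x, g x * a = f x) -> mlt g
  | mlt_Linv : forall a f g, mlt f -> (forall x, a * g x = f x) -> mlt g.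

Definition inner_mapping (f : T -> T) : Prop := mlt f /\ f e = e.

(* Automorphic loop: every inner mapping is an automorphism
   (inner mappings are bijections, so only the homomorphism property is needed). *)
Definition automorphic : Prop :=
  is_loop /\
  forall f, inner_mapping f -> forall u v : T, f (u * v) = f u * f v.

Definition condC : Prop :=
  forall a b : T, a * (a * b) = (b * a) * a <-> a * b = b * a.

Definition subloop (H : T -> Prop) : Prop :=
  H e /\
  (forall a b, H a -> H b -> H (a * b)) /\
  (forall a b x, H a -> H b -> a * x = b -> H x) /\
  (forall a b y, H a -> H b -> y * a = b -> H y).

Definition gen_subloop (S : T -> Prop) (z : T) : Prop :=
  forall H, subloop H -> (forall s, S s -> H s) -> H z.

Definition commutative_on (H : T -> Prop) : Prop :=
  forall u v, H u -> H v -> u * v = v * u.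

End Loops.

(* Main.v *)
Require Import Defs.
From Stdlib Require Import ClassicalEpsilon.

Theorem corollary3p2 (T : Type) (mul : T -> T -> T) (e : T)
  (HA : automorphic T mul e) (HC : condC T mul)
  (x y xi : T) (Hxi : mul x xi = e)
  (Hconj : mul (mul x y) xi = mul xi (mul y x)) :
  commutative_on T mul (gen_subloop T mul e (fun z => z = x \/ z = y)).
Proof.
  destruct HA as [[HLl [HLr HLe]] Haut].
  assert (lcanc : forall a b c, mul a b = mul a c -> b = c).
  { intros a b c H. destruct (HLl a (mul a b)) as [z [_ Hz]].
    rewrite <- (Hz b eq_refl). apply Hz. symmetry; exact H. }
  assert (rcanc : forall a b c, mul b a = mul c a -> b = c).
  { intros a b c H. destruct (HLr a (mul b a)) as [z [_ Hz]].
    rewrite <- (Hz b eq_refl). apply Hz. symmetry; exact H. }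
  assert (exld : forall a b, exists z, mul a z = b).
  { intros a b. destruct (HLl a b) as [z [Hz _]]. eauto. }
  pose (ld := fun a b => proj1_sig (constructive_indefinite_description _ (exld a b))).
  assert (ld_spec : forall a b, mul a (ld a b) = b).
  { intros a b. unfold ld. destruct constructive_indefinite_description. simpl. auto. }
  assert (mulE : forall a, mul e a = a) by (intro a; apply (HLe a)).
  assert (mule : forall a, mul a e = a) by (intro a; apply (HLe a)).
  pose (Tm := fun a v => ld a (mul v a)).
  assert (Tspec : forall a v, mul a (Tm a v) = mul v a) by (intros; apply ld_spec).
  assert (Tinner : forall a, inner_mapping T mul e (Tm a)).
  { intro a. split.
    - apply (mlt_Linv T mul a (fun v => mul v a)).
      + exact (mlt_R T mul a _ (mlt_id T mul)).
      + intro v. apply Tspec.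
    - apply (lcanc a). rewrite Tspec, mulE, mule. reflexivity. }
  assert (Thom : forall a u v, Tm a (mul u v) = mul (Tm a u) (Tm a v)).
  { intro a. apply Haut, Tinner. }
  assert (Te : forall a, Tm a e = e) by (intro a; apply (Tinner a)).
  assert (Taa : forall a, Tm a a = a) by (intro a; apply (lcanc a); rewrite Tspec; reflexivity).
  assert (flex : forall a v, mul a (mul v a) = mul (mul a v) a).
  { intros a v. rewrite <- (Tspec a v). rewrite <- (Tspec a (mul a v)). rewrite Thom, Taa. reflexivity. }
  assert (Tav : forall a v, Tm a (mul a v) = mul v a).
  { intros a v. apply (lcanc a). rewrite Tspec. symmetry; apply flex. }
  pose (iv := fun a => ld a e).
  assert (iv_r : forall a, mul a (iv a) = e) by (intro; apply ld_spec).
  assert (iv_l : forall a, mul (iv a) a = e).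
  { intro a. assert (H : Tm a (iv a) = iv a).
    { apply (lcanc a). rewrite <- (Taa a) at 1. rewrite <- Thom, !iv_r, Te. reflexivity. }
    rewrite <- Tspec, H. apply iv_r. }
  assert (iv_iv : forall a, iv (iv a) = a).
  { intro a. apply (lcanc (iv a)). rewrite iv_r, iv_l. reflexivity. }
  assert (aaip : forall a b, iv (mul a b) = mul (iv b) (iv a)).
  { intros a b. set (X := mul a b). set (u := ld X a).
    pose (phi := fun v => ld a (mul X (mul u v))).
    assert (phispec : forall v, mul a (phi v) = mul X (mul u v)) by (intro; apply ld_spec).
    assert (Hinn : inner_mapping T mul e phi).
    { split.
      - apply (mlt_Linv T mul a (fun v => mul X (mul u v))).
        + exact (mlt_L T mul X _ (mlt_L T mul u _ (mlt_id T mul))).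
        + exact phispec.
      - apply (lcanc a). rewrite phispec, !mule. apply ld_spec. }
    assert (Hh : forall v w, phi (mul v w) = mul (phi v) (phi w)) by (apply Haut, Hinn).
    assert (He : phi e = e) by apply Hinn.
    assert (HX : phi X = X).
    { apply (lcanc a). rewrite phispec, flex. unfold u. rewrite ld_spec. reflexivity. }
    assert (HiX : phi (iv X) = iv X).
    { apply (lcanc X). rewrite iv_r. rewrite <- HX at 1. rewrite <- Hh, iv_r. exact He. }
    assert (Hiu : phi (iv u) = b).
    { apply (lcanc a). rewrite phispec, iv_r, mule. reflexivity. }
    assert (Hu : phi u = iv b).
    { apply (rcanc b). rewrite iv_l, <- Hiu, <- Hh, iv_r. exact He. }
    assert (Hld : phi (ld u (iv X)) = iv a).
    { apply (lcanc a). rewrite phispec, !ld_spec, iv_r, iv_r. reflexivity. }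
    rewrite <- HiX, <- (ld_spec u (iv X)), Hh, Hu, Hld. reflexivity. }
  assert (Klem : forall a u, mul (iv a) u = mul (Tm a u) (iv a)).
  { intros a u. set (p := Tm a u).
    assert (H1 : Tm a (iv u) = iv p).
    { apply (lcanc p). rewrite iv_r. unfold p. rewrite <- Thom, iv_r. apply Te. }
    assert (H2 : mul a (iv p) = mul (iv u) a) by (rewrite <- H1; apply Tspec).
    assert (H3 := f_equal iv H2). rewrite !aaip, !iv_iv in H3. symmetry; exact H3. }
  assert (Hxi' : xi = iv x) by (apply (lcanc x); rewrite Hxi, iv_r; reflexivity).
  subst xi.
  set (w := Tm x y).
  assert (Hw : mul x w = mul y x) by apply Tspec.
  assert (Hxy : mul x y = mul w x).
  { apply (rcanc (iv x)). rewrite Hconj, <- Hw, Klem, Tav. reflexivity. }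
  assert (Hcomm : mul x y = mul y x).
  { apply HC. rewrite Hxy, flex, Hw. reflexivity. }
  assert (Fix : forall u, subloop T mul e (fun v => mul u v = mul v u)).
  { intro u.
    assert (Tf : forall v, mul u v = mul v u -> Tm u v = v).
    { intros v H. apply (lcanc u). rewrite Tspec. symmetry; exact H. }
    assert (Tf' : forall v, Tm u v = v -> mul u v = mul v u).
    { intros v H. rewrite <- (Tspec u v), H. reflexivity. }
    split; [|split; [|split]].
    - rewrite mule, mulE. reflexivity.
    - intros a b Ha Hb. apply Tf'. rewrite Thom, Tf, Tf; auto.
    - intros a b v Ha Hb Hv. apply Tf'. apply (lcanc a).
      rewrite <- (Tf a Ha) at 1. rewrite <- Thom, Hv. apply Tf; exact Hb.
    - intros a b v Ha Hb Hv. apply Tf'. apply (rcanc a).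
      rewrite <- (Tf a Ha) at 1. rewrite <- Thom, Hv. apply Tf; exact Hb. }
  assert (Hx : forall r, gen_subloop T mul e (fun z => z = x \/ z = y) r -> mul x r = mul r x).
  { intros r Hr. apply (Hr (fun v => mul x v = mul v x) (Fix x)).
    intros s [-> | ->]; [reflexivity | exact Hcomm]. }
  assert (Hy : forall r, gen_subloop T mul e (fun z => z = x \/ z = y) r -> mul y r = mul r y).
  { intros r Hr. apply (Hr (fun v => mul y v = mul v y) (Fix y)).
    intros s [-> | ->]; [symmetry; exact Hcomm | reflexivity]. }
  intros p q Hp Hq. apply (Hq (fun v => mul p v = mul v p) (Fix p)).
  intros s [-> | ->]; [symmetry; apply Hx; exact Hp | symmetry; apply Hy; exact Hp].
Qed.
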